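(* Let $\mathcal{M}=\{\nu_1,\dots,\nu_K\}$ be a finite set of probability measures on $\mathcal{A}^\infty$ ($\mathcal{A}$ finite or countable), and let $\varepsilon,\delta>0$. Consider the agent (Algorithm 1) that, using the uniform prior $w_\nu=1/K$ and Bayes mixture $\xi$, at each time step $t$ having observed $\omega_{<t}$ outputs $\xi(\cdot|\omega_{<t})$ if $\hat h_t(\omega_{<t})\le\varepsilon$ and outputs $\bot$ otherwise, then observes $\omega_t$. This agent is KWIK: for every $\mu\in\mathcal{M}$ it fails the run with $\mu$-probability at most $\delta$, and there is a finite number $B(\varepsilon,\delta)$ (depending also on $K$) such that, with $\mu$-probability at least $1-\delta$, it outputs $\bot$ at most $B(\varepsilon,\delta)$ times.
   Context: KWIK framework: the environment chooses an unknown $\mu\in\mathcal{M}$ and the sequence $\omega_1\omega_2\cdots$ is drawn from $\mu$. At each step $t$ the agent outputs either a predictive distribution $\rho(\cdot|\omega_{<t})$ on $\mathcal{A}$ or the symbol $\bot$; the run fails if the agent outputs $\rho$ with $h_{\omega_{<t}}(\rho,\mu)>\varepsilon$, otherwise $\omega_t$ is revealed and the run continues. Notation: $\mathcal{A}^\infty$ carries the $\sigma$-algebra generated by cylinders; $\rho(x):=\rho(\Gamma_x)$, $\rho(y|x):=\rho(xy)/\rho(x)$, $\omega_{<t}=\omega_1\cdots\omega_{t-1}$, $\rho_{<t}(\omega):=\rho(\omega_{<t})$. $\xi(A):=\frac1K\sum_{\nu\in\mathcal{M}}\nu(A)$. $h_x(\rho,\xi):=\sum_a(\sqrt{\rho(a|x)}-\sqrt{\xi(a|x)})^2$,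 $h_t(\nu,\xi)(\omega):=h_{\omega_{<t}}(\nu,\xi)$. With $w_\nu=1/K$ for all $\nu$, $\mathcal{M}_t:=\{\nu\in\mathcal{M}:\forall\tau\le t,\ \nu_{<\tau}/\xi_{<\tau}\ge\delta w_\mu/w_\nu\}=\{\nu:\forall\tau\le t,\ \nu_{<\tau}/\xi_{<\tau}\ge\delta\}$ and $\hat h_t:=\sup_{\nu\in\mathcal{M}_t}h_t(\nu,\xi)$. *)

(* Defs.v *)
From HB Require Import structures.
From mathcomp Require Import all_boot all_order all_algebra.
From mathcomp Require Import all_classical all_reals all_analysis.
Set Implicit Arguments. Unset Strict Implicit. Unset Printing Implicit Defensive.
Import Order.TTheory GRing.Theory Num.Theory.
Local Open Scope classical_set_scope.
Local Open Scope ring_scope.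

(* Sequences omega = omega_1 omega_2 ... in A^oo are functions nat -> A
   (omega_{t} is  omega (t-1)). *)

(* omega_{<t} for t = n+1 : the prefix of length n *)
Definition prefix (A : Type) (w : nat -> A) (n : nat) : seq A :=
  map w (iota 0 n).

Definition cylinder (A : Type) (x : seq A) : set (nat -> A) :=
  [set w | prefix w (size x) = x].

Definition cylinders (A : Type) : set (set (nat -> A)) :=
  [set C | exists x : seq A, C = cylinder x].

Definition seqspace (A : pointedType) := g_sigma_algebraType (@cylinders A).

(* rho(x) := rho(Gamma_x), as a real number (probability measures are finite) *)
Definition cyl (R : realType) (A : pointedType)
  (rho : probability (seqspace A) R) (x : seq A) : R :=
  fine (rho (cylinder x)).

Definition mixture (R : realType) (A : pointedType) (K : nat)
  (nu : 'I_K -> probability (seqspace A) R) (x : seq A) : R :=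
  (K%:R)^-1 * \sum_(i < K) cyl (nu i) x.

Definition condp (R : realType) (A : Type) (rho : seq A -> R) (x : seq A) (a : A) : R :=
  rho (rcons x a) / rho x.

Definition hell (R : realType) (A : choiceType) (x : seq A) (rho xi : seq A -> R)
  : \bar R :=
  (\esum_(a in [set: A]) (((Num.sqrt (condp rho x a) - Num.sqrt (condp xi x a)) ^+ 2)%:E))%E.

Definition inMt (R : realType) (A : Type) (delta : R) (nu xi : seq A -> R) (x : seq A) : Prop :=
  forall n, (n <= size x)%N -> delta <= nu (take n x) / xi (take n x).

Definition hath (R : realType) (A : pointedType) (K : nat)
  (nu : 'I_K -> probability (seqspace A) R) (delta : R) (x : seq A) : \bar R :=
  ereal_sup [set hell x (cyl (nu i)) (mixture nu) | i in [set i | inMt delta (cyl (nu i)) (mixture nu) x]].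

Definition outputs_bot (R : realType) (A : pointedType) (K : nat)
  (nu : 'I_K -> probability (seqspace A) R) (eps delta : R) (x : seq A) : bool :=
  (eps%:E < hath nu delta x)%E.

(* The run (with environment mu) fails: at some time t the agent outputs
   rho = xi(.|omega_{<t}) (i.e. does not output bottom) and h_{omega_{<t}}(rho, mu) > eps *)
Definition run_fails (R : realType) (A : pointedType) (K : nat)
  (nu : 'I_K -> probability (seqspace A) R) (eps delta : R)
  (mu : probability (seqspace A) R) : set (seqspace A) :=
  [set w | exists n : nat, ~~ outputs_bot nu eps delta (prefix w n) /\
          (eps%:E < hell (prefix w n) (mixture nu) (cyl mu))%E].

Definition few_bots (R : realType) (A : pointedType) (K : nat)
  (nu : 'I_K -> probability (seqspace A) R) (eps delta : R) (B : nat) : set (seqspace A) :=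
  [set w | forall N : nat, (\sum_(n < N) (outputs_bot nu eps delta (prefix w n) : nat) <= B)%N].

(* Main.v *)
Require Import Defs.
From HB Require Import structures.
From mathcomp Require Import all_boot all_order all_algebra.
From mathcomp Require Import all_classical all_reals all_analysis.
From mathcomp Require Import ring lra.
Import Order.TTheory GRing.Theory Num.Theory.
Local Open Scope classical_set_scope.
Local Open Scope ring_scope.
Local Notation prefix := Defs.prefix.

Lemma esumZl (R : realType) (T : choiceType) (I : set T) (a : T -> \bar R) (r : R) :
  0 <= r -> (forall i, 0 <= a i)%E ->
  (\esum_(i in I) (r%:E * a i) = r%:E * \esum_(i in I) a i)%E.
Proof.
move=> r0 a0; rewrite /esum -ereal_supZl //; last first.
  by apply/set0P; exists 0%E; exists set0; [exact: fsets_set0|rewrite fsbig_set0].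
congr ereal_sup; apply/seteqP; split => x /=.
- move=> [F FI <-]; exists (\sum_(i \in F) a i)%E; first by exists F.
  by rewrite ge0_mule_fsumr.
- move=> [y [F FI <-] <-]; exists F => //.
  by rewrite ge0_mule_fsumr.
Qed.

Lemma esumZr (R : realType) (T : choiceType) (I : set T) (a : T -> \bar R) (r : R) :
  0 <= r -> (forall i, 0 <= a i)%E ->
  (\esum_(i in I) (a i * r%:E) = (\esum_(i in I) a i) * r%:E)%E.
Proof.
move=> r0 a0; rewrite muleC -esumZl//; apply: eq_esum => i _; exact: muleC.
Qed.

Lemma measure_esum d (T : measurableType d) (R : realType) (mu : {measure set T -> \bar R})
  (J : choiceType) (x0 : J) (F : J -> set T) :
  countable [set: J] -> (forall i, measurable (F i)) -> trivIset setT F ->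
  mu (\bigcup_i F i) = (\esum_(i in setT) mu (F i))%E.
Proof.
move=> /countable_injP[f finj] mF tF.
pose g := 'pinv_(fun=> x0) setT f.
have gf i : g (f i) = i by apply: (pinvKV _ finj); rewrite in_setT.
have -> : \bigcup_i F i = \bigcup_(n in range f) F (g n).
  by rewrite bigcup_image; apply: eq_bigcupr => i _; rewrite gf.
rewrite measure_bigcup//; last first.
  move=> n m [i _ <-] [j _ <-]; rewrite !gf => /(tF _ _ I I) ->//.
rewrite nneseries_esum// set_mem_set esum_image//.
  by apply: eq_esum => i _; rewrite gf.
Qed.

Lemma mu_bigcup_le d (T : measurableType d) (R : realType) (mu : {measure set T -> \bar R})
  (F : nat -> set T) (c : \bar R) :
  (forall n, measurable (F n)) -> {homo F : n m / (n <= m)%N >-> (n <= m)%O} ->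
  (forall n, mu (F n) <= c)%E -> (mu (\bigcup_n F n) <= c)%E.
Proof.
move=> mF homF le.
have h := @nondecreasing_cvg_mu _ _ _ mu F mF (bigcupT_measurable _ mF) homF.
rewrite -(cvg_lim _ h)//; apply: lime_le; first exact: cvgP h.
by apply: nearW.
Qed.
Arguments measure_esum {d T R} mu {J} x0 {F}.
Arguments esumZl {R T} I a r.
Arguments esumZr {R T} I a r.
Arguments mu_bigcup_le {d T R} mu F c.

Lemma size_pre (A : Type) (w : nat -> A) n : size (prefix w n) = n.
Proof. by rewrite /prefix size_map size_iota. Qed.

Lemma preS (A : Type) (w : nat -> A) n : prefix w n.+1 = rcons (prefix w n) (w n).
Proof. by rewrite /prefix -addn1 iotaD map_cat cats1. Qed.

Lemma take_pre (A : Type) (w : nat -> A) m n : (m <= n)%N -> take m (prefix w n) = prefix w m.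
Proof. by move=> mn; rewrite /prefix -map_take take_iota (minn_idPl mn). Qed.

Lemma cylinder_meas (A : pointedType) (x : seq A) : measurable (cylinder x : set (seqspace A)).
Proof. by apply: sub_gen_smallest; exists x. Qed.

Lemma countable_seq (A : Type) : countable [set: A] -> countable [set: seq A].
Proof.
move=> /countable_injP[f finj]; apply/countable_injP.
have finj' : injective f by move=> a b; apply: finj; rewrite in_setT.
exists (fun s => pickle (map f s)) => s t _ _ /(pcan_inj pickleK).
exact: inj_map.
Qed.

Lemma prefix_set_eq (A : pointedType) n (Q : seq A -> Prop) :
  [set w : seqspace A | Q (prefix w n)] =
  \bigcup_x (if x \in [set x : seq A | size x = n /\ Q x] then cylinder x else set0).
Proof.
apply/seteqP; split => w /=.
- move=> Qw; exists (prefix w n) => //; rewrite ifT; last first.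
    by rewrite inE /=; split => //; exact: size_pre.
  by rewrite /cylinder /= size_pre.
- move=> [x _]; case: ifPn => //; rewrite inE => -[sx Qx]; rewrite /cylinder/= sx => ->//.
Qed.

Lemma prefix_meas (A : pointedType) n (Q : seq A -> Prop) :
  countable [set: A] -> measurable [set w : seqspace A | Q (prefix w n)].
Proof.
move=> cA; rewrite prefix_set_eq; apply: countable_bigcupT_measurable.
  exact: countable_seq.
by move=> x; case: ifPn => _; [exact: cylinder_meas|exact: measurable0].
Qed.

Lemma prefix_esum (R : realType) (A : pointedType) (P : probability (seqspace A) R) n
  (Q : seq A -> Prop) : countable [set: A] ->
  P [set w : seqspace A | Q (prefix w n)] =
  (\esum_(x in [set x : seq A | size x = n /\ Q x]) P (cylinder x))%E.
Proof.
move=> cA; rewrite prefix_set_eq (measure_esum _ [::]).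
- rewrite [in RHS]esum_mkcond; apply: eq_esum => x _.
  by case: ifPn => _ //; rewrite measure0.
- exact: countable_seq.
- by move=> x; case: ifPn => _; [exact: cylinder_meas|exact: measurable0].
- move=> x y _ _ [w []]; case: ifPn => [|_ []//]; rewrite inE => -[sx _].
  case: ifPn => [|_ _ []//]; rewrite inE => -[sy _].
  by rewrite /cylinder/= => <- <-; rewrite sx sy.
Qed.

Lemma cyl_split_set (A : pointedType) (x : seq A) :
  cylinder x = \bigcup_a (cylinder (rcons x a) : set (seqspace A)).
Proof.
apply/seteqP; split => w /=.
- rewrite /cylinder/= => wx; exists (w (size x)) => //=.
  by rewrite size_rcons preS wx.
- move=> [a _]; rewrite /cylinder/= size_rcons preS => /rcons_inj[]; done.
Qed.

Lemma cyl_split_measure (R : realType) (A : pointedType) (P : probability (seqspace A) R)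
  (x : seq A) : countable [set: A] ->
  P (cylinder x) = (\esum_(a in setT) P (cylinder (rcons x a)))%E.
Proof.
move=> cA; rewrite cyl_split_set (measure_esum _ point)//.
- by move=> a; exact: cylinder_meas.
- move=> a b _ _ [w []]; rewrite /cylinder/= !size_rcons => -> /rcons_inj[]//.
Qed.

Lemma cylE (R : realType) (A : pointedType) (P : probability (seqspace A) R) (x : seq A) :
  (cyl P x)%:E = P (cylinder x).
Proof.
rewrite /cyl fineK// ge0_fin_numE//; apply: (le_lt_trans (probability_le1 _ _)).
  exact: cylinder_meas.
by rewrite ltry.
Qed.

Lemma cyl_ge0 (R : realType) (A : pointedType) (P : probability (seqspace A) R) (x : seq A) :
  0 <= cyl P x.
Proof. by rewrite -lee_fin cylE. Qed.

Lemma cyl_nil (R : realType) (A : pointedType) (P : probability (seqspace A) R) :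
  cyl P [::] = 1.
Proof.
rewrite /cyl; have -> : cylinder [::] = [set: seqspace A] by apply/seteqP; split.
by rewrite probability_setT.
Qed.

Set Implicit Arguments. Unset Strict Implicit.

Definition Lv {A : Type} n := [set x : seq A | size x = n].

Definition pmeas {R : realType} {A : choiceType} (p : seq A -> R) :=
  [/\ forall x, 0 <= p x, p [::] = 1 &
      forall x, (p x)%:E = (\esum_(a in setT) (p (rcons x a))%:E)%E].

Lemma pm_ge0 (R : realType) (A : choiceType) (p : seq A -> R) : pmeas p -> forall x, 0 <= p x.
Proof. by case. Qed.
Lemma pm_nil (R : realType) (A : choiceType) (p : seq A -> R) : pmeas p -> p [::] = 1.
Proof. by case. Qed.
Lemma pm_split (R : realType) (A : choiceType) (p : seq A -> R) : pmeas p ->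
  forall x, (p x)%:E = (\esum_(a in setT) (p (rcons x a))%:E)%E.
Proof. by case. Qed.

Lemma Lsplit (R : realType) (A : choiceType) (f : seq A -> \bar R) n :
  (forall x, 0 <= f x)%E ->
  (\esum_(x in Lv n.+1) f x = \esum_(x in Lv n) \esum_(a in setT) f (rcons x a))%E.
Proof.
move=> f0; rewrite (esum_esum (J := fun=> setT)); last by move=> *; exact: f0.
apply: (reindex_esum (Lv n `*`` fun=> setT) (Lv n.+1) (fun k => rcons k.1 k.2)).
split.
- by move=> [x a] [/= sx _]; rewrite /Lv/= size_rcons sx.
- by move=> [x a] [y b] _ _ /= /rcons_inj[-> ->].
- move=> y; rewrite /Lv/=; case/lastP: y => [//|x a]; rewrite size_rcons => -[sx].
  by exists (x, a).
Qed.

Lemma Lv0 (A : Type) : Lv 0 = [set [::] : seq A].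
Proof. by apply/seteqP; split => x; rewrite /Lv/=; [move/size0nil|move=> ->]. Qed.

Lemma pmeas_cyl (R : realType) (A : pointedType) (P : probability (seqspace A) R) :
  countable [set: A] -> pmeas (cyl P).
Proof.
move=> cA; split; [exact: cyl_ge0|exact: cyl_nil|] => x.
rewrite cylE cyl_split_measure//; apply: eq_esum => a _; by rewrite cylE.
Qed.

Lemma mixture_ge0 (R : realType) (A : pointedType) K (nu : 'I_K -> probability (seqspace A) R) x :
  0 <= mixture nu x.
Proof.
by rewrite /mixture mulr_ge0 ?invr_ge0// sumr_ge0// => i _; exact: cyl_ge0.
Qed.

Lemma pmeas_mix (R : realType) (A : pointedType) K (nu : 'I_K -> probability (seqspace A) R) :
  (0 < K)%N -> countable [set: A] -> pmeas (mixture nu).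
Proof.
move=> K0 cA; split; [exact: mixture_ge0| |] => [|x].
  rewrite /mixture (eq_bigr (fun=> 1)) => [|i _]; last exact: cyl_nil.
  by rewrite sumr_const card_ord mulVf// pnatr_eq0 -lt0n.
rewrite /mixture EFinM -sumEFin.
under eq_bigr => i _ do rewrite (pm_split (pmeas_cyl (nu i) cA)).
rewrite -esum_sum; last by move=> *; rewrite lee_fin cyl_ge0.
rewrite -esumZl ?invr_ge0//; last by move=> a; rewrite sume_ge0// => *; rewrite lee_fin cyl_ge0.
by apply: eq_esum => a _; rewrite EFinM sumEFin.
Qed.

Lemma level_total (R : realType) (A : choiceType) (p : seq A -> R) n :
  pmeas p -> (\esum_(x in Lv n) (p x)%:E = 1)%E.
Proof.
case=> p0 p1 ps; elim: n => [|n IH].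
  by rewrite Lv0 esum_set1 ?lee_fin// p1.
rewrite Lsplit; last by move=> x; rewrite lee_fin.
by rewrite -IH; apply: eq_esum => x _; rewrite ps.
Qed.

Lemma tower (R : realType) (A : choiceType) (p : seq A -> R) (f : seq A -> R) m n :
  pmeas p -> (forall x, 0 <= f x) -> (m <= n)%N ->
  (\esum_(x in Lv n) (p x * f (take m x))%:E = \esum_(y in Lv m) (p y * f y)%:E)%E.
Proof.
case=> p0 p1 ps f0; elim: n => [|n IH].
  rewrite leqn0 => /eqP ->; apply: eq_esum => x; rewrite /Lv/= => /size0nil ->//.
rewrite leq_eqVlt => /orP[/eqP <-|]; first by apply: eq_esum => x; rewrite /Lv/= => <-; rewrite take_size.
rewrite ltnS => mn; rewrite -IH// Lsplit; last by move=> x; rewrite lee_fin mulr_ge0.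
apply: eq_esum => x; rewrite /Lv/= => sx.
transitivity (\esum_(a in setT) ((p (rcons x a))%:E * (f (take m x))%:E))%E.
  by apply: eq_esum => a _; rewrite -cats1 takel_cat ?sx// EFinM.
rewrite esumZr//; last by move=> a; rewrite lee_fin.
by rewrite -ps EFinM.
Qed.

Set Implicit Arguments. Unset Strict Implicit.

Lemma key_id (R : realType) (a b al be : R) : 0 < a -> 0 < b -> 0 <= al -> 0 <= be ->
  Num.sqrt (a^+2 * b^+2) * (Num.sqrt (al^+2 / a^+2) - Num.sqrt (be^+2 / b^+2))^+2
  + 2 * Num.sqrt (al^+2 * be^+2)
  = Num.sqrt (b^+2 / a^+2) * al^+2 + Num.sqrt (a^+2 / b^+2) * be^+2.
Proof.
move=> a0 b0 al0 be0; have a0' := ltW a0; have b0' := ltW b0.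
rewrite -!exprMn -!expr_div_n !sqrtr_sqr !ger0_norm ?divr_ge0 ?mulr_ge0//.
by field; rewrite !lt0r_neq0.
Qed.

Lemma key_id2 (R : realType) (u v n s : R) : 0 < u -> 0 < v -> 0 <= n -> 0 <= s ->
  Num.sqrt (u * v) * (Num.sqrt (n / u) - Num.sqrt (s / v))^+2 + 2 * Num.sqrt (n * s)
  = Num.sqrt (v / u) * n + Num.sqrt (u / v) * s.
Proof.
move=> u0 v0 n0 s0.
rewrite -(sqr_sqrtr (ltW u0)) -(sqr_sqrtr (ltW v0)) -(sqr_sqrtr n0) -(sqr_sqrtr s0).
by apply: key_id; rewrite ?sqrtr_gt0 ?sqrtr_ge0.
Qed.

Lemma key_id3 (R : realType) (u v : R) : 0 < u -> 0 < v ->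
  Num.sqrt (v / u) * u + Num.sqrt (u / v) * v = 2 * Num.sqrt (u * v).
Proof.
move=> u0 v0.
rewrite -(sqr_sqrtr (ltW u0)) -(sqr_sqrtr (ltW v0)).
have a0 : 0 < Num.sqrt u by rewrite sqrtr_gt0.
have b0 : 0 < Num.sqrt v by rewrite sqrtr_gt0.
rewrite -!expr_div_n -exprMn !sqrtr_sqr !ger0_norm ?divr_ge0 ?mulr_ge0 ?ltW//.
by field; rewrite !lt0r_neq0.
Qed.

Definition bh (R : realType) (A : Type) (nu xi : seq A -> R) y := Num.sqrt (nu y * xi y).

Lemma pm_child_le (R : realType) (A : choiceType) (p : seq A -> R) x a :
  pmeas p -> p (rcons x a) <= p x.
Proof.
move=> pm; rewrite -lee_fin (pm_split pm x); apply: esum_ge; exists [set a].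
  by split; [exact: finite_set1|].
by rewrite fsbig_set1.
Qed.

Lemma hell_ge0 (R : realType) (A : choiceType) (x : seq A) (rho xi : seq A -> R) :
  (0 <= hell x rho xi)%E.
Proof. by apply: esum_ge0 => a _; rewrite lee_fin sqr_ge0. Qed.

Lemma hell_step (R : realType) (A : choiceType) (nu xi : seq A -> R) (c : R) y :
  pmeas nu -> pmeas xi -> 0 < c -> (forall x, nu x <= c * xi x) ->
  ((bh nu xi y)%:E * hell y nu xi + 2%:E * (\esum_(a in setT) (bh nu xi (rcons y a))%:E)
   = 2%:E * (bh nu xi y)%:E)%E.
Proof.
move=> pn px c0 dom.
have [nu0|nun0] := eqVneq (nu y) 0.
  have cz a : nu (rcons y a) = 0.
    by apply/le_anti; rewrite (pm_ge0 pn) andbT -nu0 pm_child_le.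
  rewrite /bh nu0 mul0r sqrtr0 mul0e add0e esum1 ?mule0// => a _.
  by rewrite cz mul0r sqrtr0.
have u0 : 0 < nu y by rewrite lt0r nun0 (pm_ge0 pn).
have v0 : 0 < xi y.
  have := lt_le_trans u0 (dom y); rewrite pmulr_rgt0//.
rewrite /hell -(esumZl _ _ (bh nu xi y)) ?sqrtr_ge0//; last by move=> a; rewrite lee_fin sqr_ge0.
rewrite -(esumZl _ _ 2)//; last by move=> a; rewrite lee_fin sqrtr_ge0.
rewrite -esumD; first last.
- by move=> a _; rewrite lee_fin mulr_ge0 ?sqrtr_ge0.
- by move=> a _; rewrite lee_fin mulr_ge0 ?sqrtr_ge0 ?sqr_ge0.
transitivity (\esum_(a in setT) ((Num.sqrt (xi y / nu y))%:E * (nu (rcons y a))%:E +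
   (Num.sqrt (nu y / xi y))%:E * (xi (rcons y a))%:E))%E.
  apply: eq_esum => a _; rewrite -!EFinM -!EFinD.
  by congr (_%:E); rewrite /condp /bh key_id2// ?(pm_ge0 pn) ?(pm_ge0 px).
rewrite esumD; try by move=> *; rewrite lee_fin ?mulr_ge0 ?sqrtr_ge0 ?(pm_ge0 pn) ?(pm_ge0 px).
rewrite !esumZl; try by move=> *; rewrite ?lee_fin ?sqrtr_ge0 ?(pm_ge0 pn) ?(pm_ge0 px).
by rewrite -(pm_split pn) -(pm_split px) -!EFinM -EFinD key_id3.
Qed.

Lemma hell_level (R : realType) (A : choiceType) (nu xi : seq A -> R) (c : R) n :
  pmeas nu -> pmeas xi -> 0 < c -> (forall x, nu x <= c * xi x) ->
  ((\esum_(y in Lv n) ((bh nu xi y)%:E * hell y nu xi))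
   + 2%:E * (\esum_(y in Lv n.+1) (bh nu xi y)%:E)
   = 2%:E * (\esum_(y in Lv n) (bh nu xi y)%:E))%E.
Proof.
move=> pn px c0 dom.
have bh0 y : (0 <= (bh nu xi y)%:E)%E by rewrite lee_fin sqrtr_ge0.
rewrite Lsplit// -!(esumZl _ _ 2)//; last by move=> x; exact: esum_ge0.
rewrite -esumD; last 2 first.
- by move=> y _; rewrite mule_ge0// hell_ge0.
- by move=> y _; rewrite mule_ge0// esum_ge0.
by apply: eq_esum => y _; rewrite (hell_step _ pn px c0 dom).
Qed.

Lemma hell_total (R : realType) (A : choiceType) (nu xi : seq A -> R) (c : R) n :
  pmeas nu -> pmeas xi -> 0 < c -> (forall x, nu x <= c * xi x) ->
  ((\sum_(m < n) \esum_(y in Lv m) ((bh nu xi y)%:E * hell y nu xi))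
   + 2%:E * (\esum_(y in Lv n) (bh nu xi y)%:E) = 2%:E)%E.
Proof.
move=> pn px c0 dom; elim: n => [|n IH].
  rewrite big_ord0 add0e Lv0 esum_set1 ?lee_fin ?sqrtr_ge0//.
  by rewrite /bh (pm_nil pn) (pm_nil px) mulr1 sqrtr1 mule1.
by rewrite big_ord_recr /= -addeA (hell_level _ pn px c0 dom).
Qed.

Lemma hell_sum_le2 (R : realType) (A : choiceType) (nu xi : seq A -> R) (c : R) n :
  pmeas nu -> pmeas xi -> 0 < c -> (forall x, nu x <= c * xi x) ->
  (\sum_(m < n) \esum_(y in Lv m) ((bh nu xi y)%:E * hell y nu xi) <= 2%:E)%E.
Proof.
move=> pn px c0 dom; rewrite -(hell_total n pn px c0 dom) leeDl// mule_ge0//.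
by apply: esum_ge0 => y _; rewrite lee_fin sqrtr_ge0.
Qed.

Lemma nu_le_bh (R : realType) (A : choiceType) (nu xi : seq A -> R) (c : R) y :
  pmeas nu -> pmeas xi -> 1 <= c -> (forall x, nu x <= c * xi x) ->
  nu y <= c * bh nu xi y.
Proof.
move=> pn px c1 dom; have n0 := pm_ge0 pn y; have x0 := pm_ge0 px y.
have d := dom y; have c0 : 0 <= c by apply: le_trans c1.
have e1 : c * bh nu xi y = Num.sqrt (c^+2 * (nu y * xi y)).
  by rewrite /bh (sqrtrM _ (sqr_ge0 c)) sqrtr_sqr ger0_norm.
have e2 : nu y = Num.sqrt (nu y ^+ 2) by rewrite sqrtr_sqr ger0_norm.
rewrite e1 {1}e2 ler_sqrt; last by rewrite mulr_ge0 ?sqr_ge0 ?mulr_ge0.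
have h1 : nu y * nu y <= nu y * (c * xi y) by rewrite ler_wpM2l.
have h2 : c * (nu y * xi y) <= c ^+ 2 * (nu y * xi y).
  by rewrite ler_wpM2r ?mulr_ge0// expr2 ler_peMr.
rewrite expr2; apply: (le_trans h1).
rewrite (_ : nu y * (c * xi y) = c * (nu y * xi y)); last by ring.
exact: h2.
Qed.

Lemma nu_hell_bound (R : realType) (A : choiceType) (nu xi : seq A -> R) (c : R) n :
  pmeas nu -> pmeas xi -> 1 <= c -> (forall x, nu x <= c * xi x) ->
  (\sum_(m < n) \esum_(y in Lv m) ((nu y)%:E * hell y nu xi) <= (c * 2)%:E)%E.
Proof.
move=> pn px c1 dom; have c0 : 0 < c by apply: lt_le_trans c1.
have c0' := ltW c0.
apply: (@le_trans _ _ (\sum_(m < n) (c%:E * \esum_(y in Lv m) ((bh nu xi y)%:E * hell y nu xi)))%E).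
  apply: lee_sum => m _; rewrite -esumZl//; last first.
    by move=> y; rewrite mule_ge0 ?hell_ge0// lee_fin sqrtr_ge0.
  apply: le_esum => y _; rewrite muleA -EFinM lee_wpmul2r ?hell_ge0// lee_fin.
  exact: (nu_le_bh _ pn px c1 dom).
rewrite -ge0_sume_distrr; last by move=> m _; apply: esum_ge0 => y _; rewrite mule_ge0 ?hell_ge0// lee_fin sqrtr_ge0.
by rewrite EFinM lee_pmul2l ?lte_fin// (hell_sum_le2 n pn px c0 dom).
Qed.

Set Implicit Arguments. Unset Strict Implicit.

Lemma dom_mix (R : realType) (A : pointedType) K (nu : 'I_K -> probability (seqspace A) R) j x :
  (0 < K)%N -> cyl (nu j) x <= K%:R * mixture nu x.
Proof.
move=> K0; rewrite /mixture mulrA mulfV ?pnatr_eq0 -?lt0n// mul1r.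
rewrite (bigD1 j)//= lerDl sumr_ge0// => i _; exact: cyl_ge0.
Qed.

Lemma ratio_lt (R : realType) (m x c d : R) :
  0 <= m -> 0 <= x -> 0 <= c -> m <= c * x -> m / x < d -> m <= d * x.
Proof.
move=> m0 x0 c0 mcx; have [xe|xn0] := eqVneq x 0.
  move=> _; have m0' : m <= 0 by rewrite -(mulr0 c) -xe.
  by rewrite xe mulr0.
have xp : 0 < x by rewrite lt0r xn0.
by rewrite ltr_pdivrMr// => /ltW.
Qed.

Definition Phi (R : realType) (A : Type) (mu xi : seq A -> R) (d : R) N (x : seq A) : R :=
  if `[< exists m, (m <= N)%N /\ mu (take m x) / xi (take m x) < d >]
  then mu x else d * xi x.

Lemma Phi_ge0 (R : realType) (A : choiceType) (mu xi : seq A -> R) d N x :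
  pmeas mu -> pmeas xi -> 0 <= d -> 0 <= Phi mu xi d N x.
Proof.
move=> pm px d0; rewrite /Phi; case: ifP => _; first exact: pm_ge0.
by rewrite mulr_ge0// (pm_ge0 px).
Qed.

Lemma Phi_step (R : realType) (A : choiceType) (mu xi : seq A -> R) d c N x :
  pmeas mu -> pmeas xi -> 0 <= d -> 0 <= c -> (forall y, mu y <= c * xi y) ->
  size x = N ->
  (\esum_(a in setT) (Phi mu xi d N.+1 (rcons x a))%:E <= (Phi mu xi d N x)%:E)%E.
Proof.
move=> pm px d0 c0 dom sx.
have tk a m : (m <= N)%N -> take m (rcons x a) = take m x.
  by move=> mN; rewrite -cats1 takel_cat// sx.
rewrite {2}/Phi; case: ifPn => [/asboolP [m [mN lt]]|/asboolPn nb].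
  rewrite (pm_split pm x); apply: le_esum => a _; rewrite /Phi ifT//.
  by apply/asboolP; exists m; split; [apply: leqW|rewrite tk].
rewrite EFinM (pm_split px) -esumZl//; last by move=> a; rewrite lee_fin (pm_ge0 px).
apply: le_esum => a _; rewrite /Phi; case: ifPn => [/asboolP [m [mN lt]]|_]; last by rewrite EFinM.
rewrite lee_fin.
have {}mN : m = N.+1.
  apply/eqP; rewrite eqn_leq mN /=; rewrite ltnNge; apply/negP => mN'.
  by apply: nb; exists m; split => //; rewrite -(tk a).
move: lt; rewrite mN -sx -(size_rcons x a) take_size => lt.
by apply: (ratio_lt _ _ c0 (dom _) lt); rewrite ?(pm_ge0 pm) ?(pm_ge0 px).
Qed.

Lemma esum_le_sub (R : realType) (T : choiceType) (I J : set T) (a b : T -> \bar R) :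
  I `<=` J -> (forall i, J i -> 0 <= b i)%E -> (forall i, I i -> a i <= b i)%E ->
  (\esum_(i in I) a i <= \esum_(i in J) b i)%E.
Proof.
move=> IJ b0 ab; rewrite (esum_mkcond I) (esum_mkcond J); apply: le_esum => i _.
case: ifPn => [/set_mem Ii|_]; first by rewrite ifT ?inE ?ab//; apply: IJ.
by case: ifPn => // /set_mem /b0.
Qed.

Lemma Phi_level (R : realType) (A : choiceType) (mu xi : seq A -> R) d c N :
  pmeas mu -> pmeas xi -> 0 <= d -> 0 <= c -> (forall y, mu y <= c * xi y) ->
  (\esum_(x in Lv N) (Phi mu xi d N x)%:E <= d%:E)%E.
Proof.
move=> pm px d0 c0 dom; elim: N => [|N IH].
  rewrite Lv0 esum_set1 ?lee_fin ?Phi_ge0// /Phi (pm_nil pm) (pm_nil px).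
  case: ifPn => [/asboolP [m [m0 lt]]|_]; last by rewrite mulr1.
  by move: lt; rewrite divr1 => /ltW.
apply: le_trans IH; rewrite Lsplit; last by move=> x; rewrite lee_fin Phi_ge0.

by apply: le_esum => x; rewrite /Lv/= => sx; exact: (Phi_step pm px d0 c0 dom sx).
Qed.

Lemma hellC (R : realType) (A : choiceType) (x : seq A) (p q : seq A -> R) :
  hell x p q = hell x q p.
Proof. by apply: eq_esum => a _; rewrite -sqrrN opprB. Qed.

Lemma part1 (R : realType) (K : nat) (eps delta : R) (A : pointedType)
  (nu : 'I_K -> probability (seqspace A) R) (i : 'I_K) :
  (0 < K)%N -> 0 < eps -> 0 < delta -> countable [set: A] ->
  (nu i (run_fails nu eps delta (nu i)) <= delta%:E)%E.
Proof.
move=> K0 eps0 delta0 cA.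
set mu := nu i; set xi := mixture nu.
have pm : pmeas (cyl mu) by exact: pmeas_cyl.
have px : pmeas xi by exact: pmeas_mix.
have dom y : cyl mu y <= K%:R * xi y by exact: dom_mix.
pose Q N (x : seq A) := exists m, (m <= N)%N /\ cyl mu (take m x) / xi (take m x) < delta.
pose BadW N := [set w : seqspace A | Q N (prefix w N)].
have mBad N : measurable (BadW N) by exact: prefix_meas.
have Badle N : (mu (BadW N) <= delta%:E)%E.
  rewrite /BadW prefix_esum//.
  apply: (le_trans _ (Phi_level N pm px (ltW delta0) (ler0n _ K) dom)).
  apply: esum_le_sub.
  - by move=> x [].
  - by move=> x _; rewrite lee_fin Phi_ge0// ltW.
  - move=> x [sx Qx]; rewrite -cylE /Phi ifT//; exact/asboolP.
have homBad : {homo BadW : n m / (n <= m)%N >-> (n <= m)%O}.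
  move=> n m nm; apply/subsetPset => w; rewrite /BadW/Q/= => -[k [kn lt]]; exists k; split.
    exact: leq_trans nm.
  by move: lt; rewrite !take_pre// (leq_trans kn).
have sub : run_fails nu eps delta mu `<=` \bigcup_n BadW n.
  move=> w [n [nb lt]]; exists n => //; have [//|nQ] := pselect (BadW n w); exfalso.
  have inM : inMt delta (cyl (nu i)) (mixture nu) (prefix w n).
    move=> m; rewrite size_pre => mn; rewrite leNgt; apply/negP => lt'.
    by apply: nQ; exists m; split.
  have : (hell (prefix w n) (cyl (nu i)) (mixture nu) <= hath nu delta (prefix w n))%E.
    by apply: ereal_sup_ubound; exists i.
  move: nb; rewrite /outputs_bot -leNgt => hle hle2.
  by move: lt; rewrite hellC ltNge (le_trans hle2 hle).
have mfail : measurable (run_fails nu eps delta mu).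
  have -> : run_fails nu eps delta mu =
    \bigcup_n [set w : seqspace A | ~~ outputs_bot nu eps delta (prefix w n) /\
          (eps%:E < hell (prefix w n) (mixture nu) (cyl mu))%E].
    by apply/seteqP; split => w /= [n]; [move=> h; exists n|move=> _ h; exists n].
  apply: bigcupT_measurable => n.
  have := (prefix_meas _ n (fun x => ~~ outputs_bot nu eps delta x /\
          (eps%:E < hell x (mixture nu) (cyl mu))%E) cA).
  exact.
apply: (le_trans _ (mu_bigcup_le _ _ _ mBad homBad Badle)).
apply: le_measure => //; rewrite inE //; exact: bigcupT_measurable.
Qed.

Set Implicit Arguments. Unset Strict Implicit.

Lemma botbound (R : realType) (K : nat) (eps delta : R) (A : pointedType)
  (nu : 'I_K -> probability (seqspace A) R) (i : 'I_K) (y : seq A) :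
  (0 < K)%N -> 0 < eps -> 0 < delta ->
  ((cyl (nu i) y * (outputs_bot nu eps delta y)%:R)%:E <=
   (K%:R / (eps * delta))%:E *
     \sum_(j < K) ((cyl (nu j) y)%:E * hell y (cyl (nu j)) (mixture nu)))%E.
Proof.
move=> K0 eps0 delta0.
have hs j : (0 <= (cyl (nu j) y)%:E * hell y (cyl (nu j)) (mixture nu))%E.
  by rewrite mule_ge0 ?hell_ge0// lee_fin cyl_ge0.
have Kc : (0 <= (K%:R / (eps * delta))%:E :> \bar R)%E.
  by rewrite lee_fin divr_ge0// mulr_ge0// ltW.
have [bt|nbt] := boolP (outputs_bot nu eps delta y); last first.
  by rewrite /= mulr0 mule_ge0// sume_ge0.
rewrite /= mulr1; move: bt; rewrite /outputs_bot /hath => /ereal_sup_gt[_ [j Mj <-] ltj].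
have xi0 : 0 < mixture nu y.
  have := Mj (size y) (leqnn _); rewrite take_size; apply: contraTT.
  rewrite -leNgt => xle; have -> : mixture nu y = 0.
    by apply/le_anti; rewrite xle mixture_ge0.
  by rewrite invr0 mulr0 -ltNge.
have dj : delta * mixture nu y <= cyl (nu j) y.
  by have := Mj (size y) (leqnn _); rewrite take_size ler_pdivlMr.
have muj : cyl (nu i) y <= K%:R / delta * cyl (nu j) y.
  apply: (le_trans (@dom_mix _ _ _ nu i y K0)); rewrite -mulrA ler_wpM2l// ler_pdivlMl//.
apply: (@le_trans _ _ ((K%:R / (eps * delta))%:E *
   ((cyl (nu j) y)%:E * hell y (cyl (nu j)) (mixture nu))))%E; last first.
  by rewrite lee_wpmul2l// (bigD1 j)//= leeDl// sume_ge0.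
apply: (@le_trans _ _ ((K%:R / (eps * delta))%:E * ((cyl (nu j) y)%:E * eps%:E)))%E; last first.
  by rewrite lee_wpmul2l// lee_wpmul2l ?lee_fin ?cyl_ge0// ltW.
rewrite -!EFinM lee_fin; apply: (le_trans muj); rewrite le_eqVlt; apply/orP; left; apply/eqP.
by field; rewrite !lt0r_neq0.
Qed.

Lemma botsum (R : realType) (K : nat) (eps delta : R) (A : pointedType)
  (nu : 'I_K -> probability (seqspace A) R) (i : 'I_K) N :
  (0 < K)%N -> 0 < eps -> 0 < delta -> countable [set: A] ->
  (\sum_(n < N) \esum_(y in Lv n) (cyl (nu i) y * (outputs_bot nu eps delta y)%:R)%:E
   <= (K%:R / (eps * delta) * (K%:R * (K%:R * 2)))%:E)%E.
Proof.
move=> K0 eps0 delta0 cA.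
have Kc : 0 <= K%:R / (eps * delta) by rewrite divr_ge0// mulr_ge0// ltW.
have hs j y : (0 <= (cyl (nu j) y)%:E * hell y (cyl (nu j)) (mixture nu))%E.
  by rewrite mule_ge0 ?hell_ge0// lee_fin cyl_ge0.
have step n : (\esum_(y in Lv n) (cyl (nu i) y * (outputs_bot nu eps delta y)%:R)%:E
  <= (K%:R / (eps * delta))%:E * \sum_(j < K) \esum_(y in Lv n)
        ((cyl (nu j) y)%:E * hell y (cyl (nu j)) (mixture nu)))%E.
  rewrite -esum_sum; last by move=> *; exact: hs.
  rewrite -esumZl//; last by move=> y; rewrite sume_ge0.
  by apply: le_esum => y _; exact: botbound.
apply: le_trans; first by apply: lee_sum => n _; exact: (step n).
rewrite -ge0_sume_distrr; last by move=> n _; rewrite sume_ge0// => j _; exact: esum_ge0.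
rewrite [X in (_ <= X)%E]EFinM; apply: lee_wpmul2l; first by rewrite lee_fin.
rewrite exchange_big /=.
have pmx := pmeas_mix nu K0 cA.
have K1 : 1 <= K%:R :> R by rewrite ler1n.
apply: (@le_trans _ _ (\sum_(j < K) (K%:R * 2)%:E)%E).
  apply: lee_sum => j _.
  apply: nu_hell_bound => //; first exact: pmeas_cyl.
  by move=> x; exact: dom_mix.
rewrite sumEFin sumr_const card_ord lee_fin le_eqVlt; apply/orP; left; apply/eqP.
ring.
Qed.

Lemma part2 (R : realType) (K : nat) (eps delta : R) (A : pointedType)
  (nu : 'I_K -> probability (seqspace A) R) (i : 'I_K) (B : nat) :
  (0 < K)%N -> 0 < eps -> 0 < delta -> countable [set: A] ->
  K%:R / (eps * delta) * (K%:R * (K%:R * 2)) <= delta * (B.+1)%:R ->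
  ((1 - delta)%:E <= nu i (few_bots nu eps delta B))%E.
Proof.
move=> K0 eps0 delta0 cA hB.
set mu := nu i.
pose bot (y : seq A) := outputs_bot nu eps delta y.
pose cnt N (x : seq A) := (\sum_(n < N) (bot (take n x) : nat))%N.
pose Q N x := (B < cnt N x)%N.
pose E N := [set w : seqspace A | Q N (prefix w N)].
have mE N : measurable (E N) by exact: (prefix_meas _ N (Q N) cA).
have EE N w : E N w = (B < \sum_(n < N) (bot (prefix w n) : nat))%N.
  rewrite /E /Q /cnt /=; congr (B < _)%N; apply: eq_bigr => n _.
  by rewrite take_pre// ltnW.
have homE : {homo E : n m / (n <= m)%N >-> (n <= m)%O}.
  move=> n m nm; apply/subsetPset => w; rewrite /= !EE => /leq_trans; apply.
  rewrite -!(big_mkord xpredT (fun k => (bot (prefix w k) : nat))).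
  by rewrite [X in (_ <= X)%N](@big_cat_nat _ _ _ n) //= leq_addr.
have few : few_bots nu eps delta B = ~` \bigcup_N E N.
  apply/seteqP; split => w /=.
  - by move=> h [N _]; rewrite EE ltnNge h.
  - move=> h N; rewrite leqNgt; apply/negP => lt; apply: h; exists N => //.
    by rewrite EE.
have Ele N : (mu (E N) <= delta%:E)%E.
  rewrite /E (@prefix_esum _ _ mu N (Q N) cA).
  apply: (@le_trans _ _ (\esum_(x in Lv N)
     ((B.+1)%:R^-1%:E * (cyl mu x * (cnt N x)%:R)%:E))%E).
    apply: esum_le_sub.
    - by move=> x [].
    - by move=> x _; rewrite mule_ge0// lee_fin ?invr_ge0// mulr_ge0// cyl_ge0.
    - move=> x [sx Qx]; rewrite -cylE -EFinM lee_fin mulrCA ler_peMr ?cyl_ge0//.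
      by rewrite ler_pdivlMl// mulr1 ler_nat.
  rewrite esumZl//; last by move=> x; rewrite lee_fin mulr_ge0// cyl_ge0.
  have -> : (\esum_(x in Lv N) (cyl mu x * (cnt N x)%:R)%:E =
      \sum_(n < N) \esum_(y in Lv n) (cyl mu y * (bot y)%:R)%:E)%E.
    transitivity (\esum_(x in Lv N) \sum_(n < N) (cyl mu x * (bot (take n x))%:R)%:E)%E.
      by apply: eq_esum => x _; rewrite sumEFin -mulr_sumr /cnt natr_sum.
    rewrite esum_sum; last by move=> *; rewrite lee_fin mulr_ge0// cyl_ge0.
    apply: eq_bigr => n _.
    apply: (tower (f := fun y => (bot y)%:R)) => //; last exact: ltnW.
    exact: pmeas_cyl.
  apply: le_trans; first apply: lee_wpmul2l; [by rewrite lee_fin invr_ge0|exact: botsum|].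
  by rewrite -EFinM lee_fin mulrC ler_pdivrMr// mulrC.
have mU : measurable (\bigcup_N E N) by exact: bigcupT_measurable.
rewrite few probability_setC// EFinB.
apply: leeB => //.
exact: (mu_bigcup_le _ _ _ mE homE Ele).
Qed.

Unset Implicit Arguments.

Theorem theorem9 (R : realType) (K : nat) (eps delta : R) :
  (0 < K)%N -> 0 < eps -> 0 < delta ->
  exists B : nat,
    forall (A : pointedType) (nu : 'I_K -> probability (seqspace A) R),
      countable [set: A] -> injective nu ->
      forall i : 'I_K,
        (nu i (run_fails nu eps delta (nu i)) <= delta%:E)%E /\
        ((1 - delta)%:E <= nu i (few_bots nu eps delta B))%E.
Proof.
move=> K0 eps0 delta0.
pose C := K%:R / (eps * delta) * (K%:R * (K%:R * 2)).
exists (Num.trunc (C / delta)) => A nu cA _ i; split.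
  exact: part1.
apply: part2 => //.
by have := truncnS_gt (C / delta); rewrite ltr_pdivrMr// mulrC => /ltW.
Qed.
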